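(* Almost all finite simple graphs have a $Deg$-mate. That is, if $\mathcal{G}(n)$ denotes the set of isomorphism classes of simple graphs on $n$ vertices and $U_{Deg}(n)\subseteq \mathcal{G}(n)$ the set of those $G$ which are $Deg$-unique, then $\lim_{n\to\infty} |U_{Deg}(n)|/|\mathcal{G}(n)| = 0$.
   Context: All graphs are finite, simple (undirected, no loops, no parallel edges). For a graph $G=(V,E)$ and $v\in V$, $\deg(v)$ is the degree of $v$. The degree polynomial is $Deg(G;x)=\sum_{v\in V} x^{\deg(v)}$. For a graph polynomial $P$ (a map assigning to each graph a polynomial, invariant under isomorphism), a graph $H$ is a $P$-mate of $G$ if $P(G)=P(H)$ but $H$ is not isomorphic to $G$; $G$ is $P$-unique if it has no $P$-mate. ''Almost all graphs'' means the proportion of (isomorphism classes of) graphs of order $n$ with the property tends to $1$ as $n\to\infty$. *)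

(* Defs.v *)
From HB Require Import structures.
From mathcomp Require Import all_boot all_order all_algebra.
From mathcomp Require Import all_classical all_reals all_analysis.
Set Implicit Arguments. Unset Strict Implicit. Unset Printing Implicit Defensive.
Import Order.TTheory GRing.Theory Num.Theory.
Local Open Scope ring_scope.

Definition graph (n : nat) := {ffun 'I_n * 'I_n -> bool}.

Definition simple_graph (n : nat) (g : graph n) : bool :=
  [forall x : 'I_n, forall y : 'I_n, (g (x, y) == g (y, x)) && ~~ g (x, x)].

Definition graph_iso (n m : nat) (g : graph n) (h : graph m) : Prop :=
  exists f : 'I_n -> 'I_m, bijective f /\
    forall x y : 'I_n, g (x, y) = h (f x, f y).

Definition vdeg (n : nat) (g : graph n) (v : 'I_n) : nat := #|[set u | g (v, u)]|.

Definition Deg (n : nat) (g : graph n) : {poly int} :=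
  \sum_(v : 'I_n) 'X^(vdeg g v).

Definition Deg_mate (n m : nat) (g : graph n) (h : graph m) : Prop :=
  simple_graph h /\ Deg h = Deg g /\ ~ graph_iso g h.

Definition Deg_unique (n : nat) (g : graph n) : Prop :=
  ~ exists (m : nat) (h : graph m), Deg_mate g h.

Definition iso_class (n : nat) (g : graph n) : {set graph n} :=
  [set h : graph n | simple_graph h && `[< graph_iso g h >]].

Definition iso_classes (n : nat) : {set {set graph n}} :=
  [set iso_class g | g in [set g : graph n | simple_graph g]].

Definition Deg_unique_classes (n : nat) : {set {set graph n}} :=
  [set C in iso_classes n | `[< forall g : graph n, g \in C -> Deg_unique g >]].

(* Main.v *)
Require Import Defs.
From HB Require Import structures.
From mathcomp Require Import all_boot all_order all_algebra.
From mathcomp Require Import all_classical all_reals all_analysis.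
From mathcomp Require Import zify.
Import Order.TTheory GRing.Theory Num.Theory.
Local Open Scope classical_set_scope.
Local Open Scope ring_scope.

Set Implicit Arguments. Unset Strict Implicit.
Section Aux.
Local Close Scope classical_set_scope.
Local Open Scope nat_scope.

Lemma iso_refl n (g : graph n) : graph_iso g g.
Proof. exists id; split; last by []. by exists id. Qed.

Lemma iso_sym n m (g : graph n) (h : graph m) : graph_iso g h -> graph_iso h g.
Proof.
move=> [f [[f' fK f'K] H]]; exists f'; split; first by exists f.
by move=> x y; rewrite H !f'K.
Qed.

Lemma iso_trans n m p (g : graph n) (h : graph m) (k : graph p) :
  graph_iso g h -> graph_iso h k -> graph_iso g k.
Proof.
move=> [f1 [b1 H1]] [f2 [b2 H2]]; exists (f2 \o f1); split.
  exact: bij_comp.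
by move=> x y; rewrite H1 H2.
Qed.

Lemma class_eq n (g h : graph n) : graph_iso g h -> iso_class g = iso_class h.
Proof.
move=> gh; apply/setP=> x; rewrite !inE.
case: (simple_graph x) => //=.
apply/asboolP/asboolP => H.
  first [exact: iso_trans (iso_sym gh) H | exact: iso_trans gh H].
first [exact: iso_trans (iso_sym gh) H | exact: iso_trans gh H].
Qed.

Lemma mem_class n (g : graph n) : simple_graph g -> g \in iso_class g.
Proof. by move=> sg; rewrite inE sg; apply/asboolP; apply: iso_refl. Qed.

Definition rep n (C : {set graph n}) : graph n := odflt [ffun=> false] [pick g in C].

Lemma rep_in n (C : {set graph n}) : C \in iso_classes n -> rep C \in C.
Proof.
move=> /imsetP[g]; rewrite inE => sg ->.
rewrite /rep; case: pickP => [x Hx | H] //=.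
by move: (H g); rewrite mem_class.
Qed.

Lemma class_rep n (C : {set graph n}) : C \in iso_classes n ->
  C = iso_class (rep C) /\ simple_graph (rep C).
Proof.
move=> HC; have := rep_in HC; case/imsetP: HC => a _ ->.
rewrite inE => /andP[s /asboolP ia]; split => //.
exact: class_eq.
Qed.

Lemma vdeg_le n (g : graph n) v : vdeg g v <= n.
Proof. by rewrite /vdeg; apply: leq_trans (max_card _) _; rewrite card_ord. Qed.

Lemma U_le n : #|Deg_unique_classes n| <= n.+1 ^ n.
Proof.
pose d (C : {set graph n}) : {ffun 'I_n -> 'I_n.+1} :=
  [ffun v => inord (vdeg (rep C) v)].
have inj : {in Deg_unique_classes n &, injective d}.
  move=> C1 C2; rewrite !inE => /andP[c1 /asboolP u1] /andP[c2 /asboolP u2] e.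
  have hv v : vdeg (rep C1) v = vdeg (rep C2) v.
    have := congr1 (fun f : {ffun 'I_n -> 'I_n.+1} => val (f v)) e; rewrite /= !ffunE.
    by rewrite !inordK // ltnS vdeg_le.
  have hD : Deg (rep C2) = Deg (rep C1).
    by rewrite /Deg; apply: eq_bigr => v _; rewrite hv.
  have [e1 s1] := class_rep c1; have [e2 s2] := class_rep c2.
  have i12 : graph_iso (rep C1) (rep C2).
    apply: contrapT => ni; apply: (u1 _ (rep_in c1)).
    by exists n, (rep C2).
  by rewrite e1 e2; apply: class_eq.
rewrite -(card_in_imset inj).
apply: leq_trans (max_card _) _.
by rewrite card_ffun !card_ord.
Qed.

Lemma S_le n : #|[set g : graph n | simple_graph g]| <= #|iso_classes n| * n ^ n.
Proof.
pose F (q : {set graph n} * {ffun 'I_n -> 'I_n}) : graph n :=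
  [ffun p => rep q.1 (q.2 p.1, q.2 p.2)].
have sub : [set g : graph n | simple_graph g] \subset
    F @: finset.setX (iso_classes n) [set: {ffun 'I_n -> 'I_n}].
  apply/fintype.subsetP => g; rewrite inE => sg.
  have Hc : iso_class g \in iso_classes n by apply/imsetP; exists g; rewrite ?inE.
  have := rep_in Hc; rewrite inE => /andP[_ /asboolP [f [_ Hf]]].
  apply/imsetP; exists (iso_class g, finfun f).
    by rewrite finset.in_setX Hc finset.in_setT.
  apply/ffunP => -[x y]; rewrite !ffunE /=. exact: Hf.
apply: leq_trans (subset_leq_card sub) _.
apply: leq_trans (leq_imset_card _ _) _.
by rewrite finset.cardsX finset.cardsT card_ffun !card_ord.
Qed.

Definition Fk k (f : {ffun 'I_k * 'I_k -> bool}) (a b : nat) : bool :=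
  match (insub a : option 'I_k), (insub b : option 'I_k) with
  | Some i, Some j => f (i, j)
  | _, _ => false
  end.

Lemma Fk_val k f (i j : 'I_k) : Fk f i j = f (i, j).
Proof. by rewrite /Fk !valK. Qed.

Lemma S_ge n : 2 ^ (n./2 * n./2) <= #|[set g : graph n | simple_graph g]|.
Proof.
set k := n./2.
have kk : k + k <= n by rewrite addnn -[X in _ <= X](odd_double_half n) leq_addl.
pose G (f : {ffun 'I_k * 'I_k -> bool}) : graph n :=
  [ffun p : 'I_n * 'I_n =>
     [&& val p.1 < k, k <= val p.2 & Fk f (val p.1) (val p.2 - k)] ||
     [&& val p.2 < k, k <= val p.1 & Fk f (val p.2) (val p.1 - k)]].
have inj : injective G.
  move=> f1 f2 e; apply/ffunP => -[i j].
  have hi : i < n by apply: leq_trans (ltn_ord i) _; lia.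
  have hj : j + k < n by have := ltn_ord j; lia.
  have := congr1 (fun g : graph n => g (Ordinal hi, Ordinal hj)) e.
  rewrite !ffunE /= ltn_ord leq_addl addnK !Fk_val /=.
  by rewrite ltnNge leq_addl /= !orbF.
have sub : G @: [set: {ffun 'I_k * 'I_k -> bool}] \subset
           [set g : graph n | simple_graph g].
  apply/fintype.subsetP => g /imsetP[f _ ->]; rewrite inE.
  apply/forallP => x; apply/forallP => y; rewrite !ffunE /=.
  rewrite orbC eqxx /=.
  by case: ltnP => //= h1; rewrite leqNgt h1.
apply: leq_trans (subset_leq_card sub).
by rewrite card_imset // finset.cardsT card_ffun card_bool card_prod !card_ord.
Qed.

Lemma pow_big j : 10 <= j -> 64 * j.+1 <= 2 ^ j.
Proof.
elim: j => // j IH; rewrite leq_eqVlt => /orP[/eqP <- //|].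
rewrite ltnS => /IH h; rewrite expnS; lia.
Qed.

Lemma main_nat n : 640 <= n ->
  #|Deg_unique_classes n| * n.+1 <= #|iso_classes n| /\ 0 < #|iso_classes n|.
Proof.
move=> hn.
set k := n./2. set j := n %/ 64.
have hk : k + k <= n <= k + k + 1.
  move: (odd_double_half n); rewrite -/k -addnn.
  by case: (odd n) => /= e; lia.
have hj1 : 64 * j <= n by rewrite mulnC; apply: leq_divM.
have hj2 : n < 64 * j.+1.
  by rewrite /j mulnC; apply: ltn_ceil.
have j10 : 10 <= j by rewrite /j; apply: (@leq_trans (640 %/ 64)) => //; apply: leq_div2r.
have h2 : n.+1 <= 2 ^ j by apply: leq_trans (pow_big j10); lia.
have h3 : n.+1 ^ (n + n).+1 <= 2 ^ (k * k).
  apply: leq_trans (_ : (2 ^ j) ^ (n + n).+1 <= _).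
    by rewrite leq_exp2r.
  rewrite -expnM leq_exp2l //; nia.
have hU := U_le n; have hS := S_le n; have hSg := S_ge n.
have hC : 0 < #|iso_classes n|.
  rewrite lt0n; apply/negP => /eqP h0; move: (leq_trans hSg hS).
  by rewrite h0 mul0n leqn0 expn_eq0.
split=> //.
rewrite -(@leq_pmul2r (2 ^ (k * k))) ?expn_gt0 //.
apply: (@leq_trans (#|Deg_unique_classes n| * n.+1 * (#|iso_classes n| * n ^ n))).
  by rewrite leq_mul2l (leq_trans hSg hS) orbT.
apply: (@leq_trans (n.+1 ^ n * n.+1 * (#|iso_classes n| * n.+1 ^ n))).
  by rewrite !leq_mul // leq_exp2r // ?lt0n //; lia.
rewrite mulnCA leq_mul2l; apply/orP; right.
apply: leq_trans h3; rewrite -expnSr -expnD; apply: leq_pexp2l => //; lia.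
Qed.

End Aux.

Theorem theorem1 (R : realType) :
  (fun n : nat => (#|Deg_unique_classes n|%:R / #|iso_classes n|%:R : R))
    @ \oo --> 0.
Proof.
apply: (@squeeze_cvgr _ _ _ _ (fun=> (0:R)) (@harmonic R)).
- exists 640%N => // n /= hn.
  have [h1 h2] := main_nat hn.
  have C0 : (0 : R) < #|iso_classes n|%:R by rewrite ltr0n.
  rewrite divr_ge0 ?ler0n //=.
  rewrite ler_pdivrMr // ler_pdivlMl ?ltr0n // -natrM ler_nat mulnC.
  exact: h1.
- apply: (@cvg_cst _ 0 nat \oo).
- exact: cvg_harmonic.
Qed.
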